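(* Let $\mu$ be a locally finite positive Borel measure on $\mathbb{R}$ and let $I$ be a dyadic interval with left and right halves $I_{\mathrm{left}},I_{\mathrm{right}}$. For an interval $J$ let \[ \boldsymbol{M}_{J}=\begin{bmatrix}\int_J d\mu&\int_J x\,d\mu\\ \int_J x\,d\mu&\int_J x^2d\mu\end{bmatrix}. \] (1) If $\mu(I_{\mathrm{left}})>0$ and $\mu(I_{\mathrm{right}})>0$, and $\boldsymbol{M}_{I_{\mathrm{left}}}$ is positive definite while $\det\boldsymbol{M}_{I_{\mathrm{right}}}=0$, then $L_{I;2}^{2}(\mu)$ is one-dimensional (so there is exactly one nonzero Alpert function $a_I^{\mu,1}=a_I^{\mu,2}\neq0$ up to sign); the same conclusion holds when the roles of $I_{\mathrm{left}}$ and $I_{\mathrm{right}}$ are interchanged. (2) In all other cases in which at least one of $\boldsymbol{M}_{I_{\mathrm{left}}}$, $\boldsymbol{M}_{I_{\mathrm{right}}}$ fails to be positive definite, $L_{I;2}^{2}(\mu)=\{0\}$ in $L^2(\mu)$ (i.e. $a_I^{\mu,1}=a_I^{\mu,2}=0$).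
   Context: $L_{I;2}^{2}(\mu)$ is the subspace of $L^{2}(\mu)$ of functions $f=(\alpha_1x+\alpha_0)\mathbf{1}_{I_{\mathrm{left}}}+(\beta_1x+\beta_0)\mathbf{1}_{I_{\mathrm{right}}}$ with real coefficients such that $\int f\,d\mu=\int f(x)x\,d\mu(x)=0$. The Alpert functions $a_I^{\mu,1},a_I^{\mu,2}$ are an orthonormal (in $L^2(\mu)$) family spanning $L^2_{I;2}(\mu)$, with vanishing functions discarded. *)

(* Defs.v *)
From HB Require Import structures.
From mathcomp Require Import all_boot all_order all_algebra.
From mathcomp Require Import all_classical all_reals all_analysis.
Set Implicit Arguments. Unset Strict Implicit. Unset Printing Implicit Defensive.
Import Order.TTheory GRing.Theory Num.Theory.
Local Open Scope classical_set_scope.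
Local Open Scope ring_scope.

Definition locally_finite (R : realType)
  (mu : {measure set (measurableTypeR R) -> \bar R}) : Prop :=
  forall a b : R, (mu `[a, b]%classic < +oo)%E.

Definition dyL (R : realType) (n k : int) : R := k%:~R * (2 : R) ^ (- n).
Definition dyM (R : realType) (n k : int) : R := (k%:~R + 2^-1) * (2 : R) ^ (- n).
Definition dyR (R : realType) (n k : int) : R := (k + 1)%:~R * (2 : R) ^ (- n).
Definition Ileft (R : realType) (n k : int) : set R := `[@dyL R n k, @dyM R n k[%classic.
Definition Iright (R : realType) (n k : int) : set R := `[@dyM R n k, @dyR R n k[%classic.







Definition Mmat (R : realType) (mu : {measure set (measurableTypeR R) -> \bar R})
  (J : set R) : 'M[R]_2 :=
  \matrix_(i < 2, j < 2) Rintegral mu J (fun x : R => x ^+ (i + j)).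

Definition posdef (R : realType) (M : 'M[R]_2) : Prop :=
  forall v : 'cV[R]_2, v != 0 -> 0 < (v^T *m M *m v) 0 0.

(* Membership in L^2_{I;2}(mu) (as functions; the L^2 class is taken mod mu-a.e.). *)
Definition L2I2 (R : realType) (mu : {measure set (measurableTypeR R) -> \bar R})
  (n k : int) (f : R -> R) : Prop :=
  (exists a1 a0 b1 b0 : R,
      f = fun x => (a1 * x + a0) * indic (@Ileft R n k) x
                 + (b1 * x + b0) * indic (@Iright R n k) x)
  /\ (\int[mu]_x (f x)%:E = 0)%E
  /\ (\int[mu]_x (f x * x)%:E = 0)%E.

Definition L2I2_dim1 (R : realType) (mu : {measure set (measurableTypeR R) -> \bar R})
  (n k : int) : Prop :=
  exists g : R -> R, L2I2 mu n k g
    /\ ~ {ae mu, forall x, g x = 0}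
    /\ forall f, L2I2 mu n k f -> exists c : R, {ae mu, forall x, f x = c * g x}.

Definition L2I2_zero (R : realType) (mu : {measure set (measurableTypeR R) -> \bar R})
  (n k : int) : Prop :=
  forall f, L2I2 mu n k f -> {ae mu, forall x, f x = 0}.

Definition case1 (R : realType) (mu : {measure set (measurableTypeR R) -> \bar R})
  (n k : int) : Prop :=
  (0 < mu (@Ileft R n k))%E /\ (0 < mu (@Iright R n k))%E /\
  ((posdef (Mmat mu (@Ileft R n k)) /\ \det (Mmat mu (@Iright R n k)) = 0)
   \/ (posdef (Mmat mu (@Iright R n k)) /\ \det (Mmat mu (@Ileft R n k)) = 0)).

(* Main.v *)
Require Import Defs.
From HB Require Import structures.
From mathcomp Require Import all_boot all_order all_algebra.
From mathcomp Require Import all_classical all_reals all_analysis.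
From mathcomp Require Import measurable_realfun.
From mathcomp Require Import ring lra.
Import Order.TTheory GRing.Theory Num.Theory.
Local Open Scope classical_set_scope.
Local Open Scope ring_scope.

Lemma impl (P Q G : Prop) : P -> (Q -> G) -> ((P -> Q) -> G).
Proof. by move=> p qg pq; apply: qg; apply: pq. Qed.


Lemma det22 (R : comNzRingType) (A : 'M[R]_2) :
  \det A = A 0 0 * A 1 1 - A 0 1 * A 1 0.
Proof.
rewrite (expand_det_row _ ord0) !big_ord_recr big_ord0 /= /cofactor !det_mx11.
rewrite !mxE /=.
have -> : widen_ord (m:=2) (leqnSn 1) ord_max = 0 by apply/val_inj.
have -> : lift (ord0 : 'I_2) 0 = 1 by apply/val_inj.
have -> : lift (ord_max : 'I_2) 0 = 0 by apply/val_inj.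
have -> : (ord_max : 'I_2) = 1 by apply/val_inj.
rewrite expr0 expr1. ring.
Qed.

Lemma qform22 (R : comNzRingType) (A : 'M[R]_2) (v : 'cV[R]_2) :
  (v^T *m A *m v) 0 0 = v 0 0 * v 0 0 * A 0 0 + v 0 0 * v 1 0 * (A 0 1 + A 1 0)
     + v 1 0 * v 1 0 * A 1 1.
Proof.
rewrite !mxE !big_ord_recr !big_ord0 /= !mxE !big_ord_recr !big_ord0 /= !mxE.
have -> : widen_ord (m:=2) (leqnSn 1) ord_max = 0 by apply/val_inj.
have -> : (ord_max : 'I_2) = 1 by apply/val_inj.
ring.
Qed.

Lemma ord2 (i : 'I_2) : i = 0 \/ i = 1.
Proof. by case: i => [[|[|//]]] Hi; [left|right]; apply/val_inj. Qed.

Definition vec2 (R : comNzRingType) (a b : R) : 'cV[R]_2 :=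
  \col_(i < 2) (if i == 0 then a else b).
Arguments vec2 {R}.

Lemma vec2E0 (R : comNzRingType) (a b : R) : vec2 a b 0 0 = a.
Proof. by rewrite mxE. Qed.
Lemma vec2E1 (R : comNzRingType) (a b : R) : vec2 a b 1 0 = b.
Proof. by rewrite mxE. Qed.

Lemma vec2_neq0 (R : comNzRingType) (a b : R) : a != 0 -> vec2 a b != 0.
Proof.
move=> a0; apply/negP => /eqP h; move: a0.
by have := congr1 (fun m : 'cV[R]_2 => m 0 0) h; rewrite vec2E0 mxE => ->; rewrite eqxx.
Qed.

Lemma vec2_neq0b (R : comNzRingType) (a b : R) : b != 0 -> vec2 a b != 0.
Proof.
move=> a0; apply/negP => /eqP h; move: a0.
by have := congr1 (fun m : 'cV[R]_2 => m 1 0) h; rewrite vec2E1 mxE => ->; rewrite eqxx.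
Qed.

Lemma neq0_cV2 (R : comNzRingType) (v : 'cV[R]_2) : v != 0 -> v 0 0 != 0 \/ v 1 0 != 0.
Proof.
move=> h; case: (boolP (v 0 0 == 0)) => [/eqP h0|]; last by left.
case: (boolP (v 1 0 == 0)) => [/eqP h1|]; last by right.
exfalso; move/negP: h; apply; apply/eqP/matrixP => i j.
rewrite (ord1 j) mxE; by case: (ord2 i) => ->.
Qed.

Lemma posdefP (R : realType) (M : 'M[R]_2) : M 0 1 = M 1 0 ->
  posdef M <-> (0 < M 0 0 /\ 0 < M 0 0 * M 1 1 - M 0 1 * M 0 1).
Proof.
move=> sym; split.
  move=> h; have h1 := h (vec2 1 0) (@vec2_neq0 _ _ 0 (oner_neq0 R)).
  rewrite qform22 vec2E0 vec2E1 in h1.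
  have m0 : 0 < M 0 0.
    by move: h1; rewrite !mul0r !mulr0 !addr0 !mul1r mul0r addr0.
  split => //.
  have h2 := h (vec2 (- M 0 1) (M 0 0)) (@vec2_neq0b _ (- M 0 1) _ (lt0r_neq0 m0)).
  rewrite qform22 vec2E0 vec2E1 -sym in h2.
  have e : - M 0 1 * - M 0 1 * M 0 0 + - M 0 1 * M 0 0 * (M 0 1 + M 0 1) + M 0 0 * M 0 0 * M 1 1
     = M 0 0 * (M 0 0 * M 1 1 - M 0 1 * M 0 1) by ring.
  by rewrite e pmulr_rgt0 in h2.
move=> [m0 d] v /neq0_cV2 hv; rewrite qform22 -sym.
set a := v 0 0; set b := v 1 0; set m1 := M 0 1.
have e : M 0 0 * (a * a * M 0 0 + a * b * (m1 + m1) + b * b * M 1 1) =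
   (a * M 0 0 + b * m1) ^+ 2 + b * b * (M 0 0 * M 1 1 - m1 * m1) by rewrite /m1; ring.
rewrite -(pmulr_rgt0 _ m0) e.
case: (boolP (b == 0)) => [/eqP b0|bn0].
  rewrite b0 !mul0r !addr0; case: hv => [an0|]; last by rewrite -/b b0 eqxx.
  by rewrite lt0r sqr_ge0 andbT sqrf_eq0 mulf_neq0 // lt0r_neq0.
have p1 := sqr_ge0 (a * M 0 0 + b * m1).
have p2 : 0 < b * b * (M 0 0 * M 1 1 - m1 * m1).
  by apply: mulr_gt0 => //; rewrite lt0r -expr2 sqr_ge0 andbT sqrf_eq0.
lra.
Qed.

Section Meas.
Variable R : realType.
Variable mu : {measure set (measurableTypeR R) -> \bar R}.

Definition PI (f : R -> R) (v : R) :=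
  mu.-integrable setT (EFin \o f) /\ (\int[mu]_x (f x)%:E = v%:E)%E.

Lemma PI_lin f g v w c : PI f v -> PI g w -> PI (fun x => c * f x + g x) (c * v + w).
Proof.
move=> [if1 e1] [ig e2].
rewrite /PI.
have ic : mu.-integrable setT (fun x => c%:E * (EFin \o f) x)%E by apply: integrableZl.
have -> : (EFin \o (fun x => c * f x + g x)) = (fun x => c%:E * (EFin \o f) x + (EFin \o g) x)%E.
  by apply/funext => x /=; rewrite EFinD EFinM.
split; first exact: (integrableD _ ic ig).
rewrite (integralD measurableT ic ig) /= integralZl //= e1 e2.
by rewrite -EFinM -EFinD.
Qed.

Lemma PI_ext f g v : PI f v -> (forall x, f x = g x) -> PI g v.
Proof. by move=> h e; have -> : g = f by apply/funext => x; rewrite e. Qed.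

Lemma PI_ge0 f v : PI f v -> (forall x, 0 <= f x) -> 0 <= v.
Proof.
move=> [_ e] f0; rewrite -lee_fin -e; apply: integral_ge0 => x _.
by rewrite lee_fin.
Qed.

Lemma aeS (P Q : R -> Prop) : (forall x, P x -> Q x) ->
  {ae mu, forall x, P x} -> {ae mu, forall x, Q x}.
Proof. by move=> h; apply: (@filterS _ _ (ae_filter_ringOfSetsType mu)) => x /h. Qed.

Lemma PI_ae0 f v : PI f v -> {ae mu, forall x, f x = 0} -> v = 0.
Proof.
move=> [ifn e] ae.
have mf := measurable_int mu ifn.
have : (\int[mu]_x (f x)%:E = \int[mu]_x (cst 0%E) x)%E.
  apply: ae_eq_integral => //.
  by apply: aeS ae => x /= ->.
by rewrite e integral0 => -[].
Qed.

Lemma PI_eq0 f : PI f 0 -> (forall x, 0 <= f x) -> {ae mu, forall x, f x = 0}.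
Proof.
move=> [ifn e] f0.
have mf := measurable_int mu ifn.
have : ae_eq mu setT (EFin \o f) (cst 0%E).
  apply/(ae_eq_integral_abs mu measurableT mf).
  transitivity (\int[mu]_x (f x)%:E)%E; last by rewrite e.
  apply: eq_integral => x _ /=.
  by rewrite /abse ger0_norm.
apply: aeS => x /= h; have := h I; by case.
Qed.



Hypothesis lf : locally_finite mu.

Lemma PI_e (c e : R) (j : nat) :
  PI (fun x => x ^+ j * indic `[c, e[ x) (Rintegral mu `[c, e[ (fun x => x ^+ j)).
Proof.
set J := `[c, e[%classic.
have mJ : measurable J by exact: measurable_itv.
have muJ : (mu J < +oo)%E.
  apply: le_lt_trans (lf c e).
  apply: le_measure; rewrite ?inE; try exact: measurable_itv.
  by move=> x; rewrite /J /= !in_itv /= => /andP[-> /ltW ->].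
pose B : R := `|c| + `|e|.
have bnd : forall x, J x -> `|x ^+ j| <= B ^+ j.
  move=> x; rewrite /J /= in_itv /= => /andP[cx xe].
  rewrite normrX; apply: lerXn2r; rewrite ?nnegrE ?addr_ge0 //.
  have h1 := ler_norm c; have h2 := ler_norm (- c); rewrite normrN in h2.
  have h3 := ler_norm e; have h4 := ler_norm (- e); rewrite normrN in h4.
  apply/ler_normlP; split; rewrite /B; lra.
have iJ : mu.-integrable J (EFin \o (fun x => x ^+ j)).
  eapply (@le_integrable _ _ _ mu J mJ _ (cst (B ^+ j)%:E)%E).
    apply/measurable_EFinP; apply: measurable_funX; exact: measurable_id.
    have Bj : 0 <= B ^+ j by apply: exprn_ge0; rewrite /B addr_ge0.
    by move=> x Jx /=; rewrite lee_fin (ger0_norm Bj) bnd.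
  apply/integrableP; split; first exact: measurable_cst.
  rewrite integral_cst //= lte_mul_pinfty //.
have pe : forall x, ((EFin \o (fun x => x ^+ j)) \_ J) x = (x ^+ j * \1_J x)%:E.
  move=> x; rewrite patchE indicE; case: (x \in J) => /=; by rewrite ?mulr1 ?mulr0.
split.
  have := (@integrable_mkcond _ _ _ mu J _ mJ).1 iJ.
  by apply: eq_integrable => // x _; rewrite pe.
transitivity (\int[mu]_(x in J) (x^+j)%:E)%E.
  by rewrite [RHS]integral_mkcond; apply: eq_integral => x _; rewrite pe.
rewrite /Rintegral fineK //; exact: integrable_fin_num.
Qed.

Lemma PI_eqv f v w : PI f v -> v = w -> PI f w.
Proof. by move=> h <-. Qed.

Lemma PI_0 : PI (fun=> 0) 0.
Proof.
split; last by rewrite integral0.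
apply/integrableP; split; first exact: measurable_cst.
by rewrite /= normr0 integral0.
Qed.

Variables n k : int.
Notation L := (@Ileft R n k).
Notation RR := (@Iright R n k).
Definition Lm (j : nat) := Rintegral mu L (fun x => x ^+ j).
Definition Rm (j : nat) := Rintegral mu RR (fun x => x ^+ j).
Definition Fc (a1 a0 b1 b0 : R) := fun x : R =>
  (a1 * x + a0) * indic L x + (b1 * x + b0) * indic RR x.
Definition Q (m0 m1 m2 a0 a1 : R) := a0 * a0 * m0 + 2 * a0 * a1 * m1 + a1 * a1 * m2.
Definition QL a0 a1 := Q (Lm 0) (Lm 1) (Lm 2) a0 a1.
Definition QR a0 a1 := Q (Rm 0) (Rm 1) (Rm 2) a0 a1.

Lemma PI_comb c0 c1 c2 d0 d1 d2 :
  PI (fun x => (c0 + c1 * x + c2 * (x * x)) * indic L x + (d0 + d1 * x + d2 * (x * x)) * indic RR x)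
     (c0 * Lm 0 + c1 * Lm 1 + c2 * Lm 2 + d0 * Rm 0 + d1 * Rm 1 + d2 * Rm 2).
Proof.
pose eL j := PI_e (@dyL R n k) (@dyM R n k) j.
pose eR j := PI_e (@dyM R n k) (@dyR R n k) j.
have := @PI_lin _ _ _ _ c0 (eL 0%N) (@PI_lin _ _ _ _ c1 (eL 1%N) (@PI_lin _ _ _ _ c2 (eL 2%N)
        (@PI_lin _ _ _ _ d0 (eR 0%N) (@PI_lin _ _ _ _ d1 (eR 1%N) (@PI_lin _ _ _ _ d2 (eR 2%N) PI_0))))).
move/PI_ext => h; apply: PI_eqv.
  apply: h => x; rewrite !expr0 !expr1 !expr2 /=; ring.
rewrite /Lm /Rm /Ileft /Iright; ring.
Qed.


Lemma ind_cases x : (indic L x = 0 :> R /\ indic RR x = 0 :> R) \/ (indic L x = 1 :> R /\ indic RR x = 0 :> R)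
  \/ (indic L x = 0 :> R /\ indic RR x = 1 :> R).
Proof.
rewrite !indicE.
case hL: (x \in L); case hR: (x \in RR) => /=; [|by right; left|by right; right|by left].
exfalso; move: hL hR => /set_mem + /set_mem; rewrite /Ileft /Iright /= !in_itv /=.
by move=> /andP[_ h1] /andP[h2 _]; move: (lt_le_trans h1 h2); rewrite ltxx.
Qed.

Lemma I1 a1 a0 b1 b0 : PI (Fc a1 a0 b1 b0) (a0 * Lm 0 + a1 * Lm 1 + b0 * Rm 0 + b1 * Rm 1).
Proof.
have := PI_comb a0 a1 0 b0 b1 0; move/PI_ext => h; apply: PI_eqv.
  by apply: h => x; rewrite /Fc; ring.
ring.
Qed.

Lemma I2 a1 a0 b1 b0 : PI (fun x => Fc a1 a0 b1 b0 x * x)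
  (a0 * Lm 1 + a1 * Lm 2 + b0 * Rm 1 + b1 * Rm 2).
Proof.
have := PI_comb 0 a0 a1 0 b0 b1; move/PI_ext => h; apply: PI_eqv.
  by apply: h => x; rewrite /Fc; ring.
ring.
Qed.

Lemma I3 a1 a0 b1 b0 : PI (fun x => Fc a1 a0 b1 b0 x ^+ 2) (QL a0 a1 + QR b0 b1).
Proof.
have := PI_comb (a0 * a0) (2 * a0 * a1) (a1 * a1) (b0 * b0) (2 * b0 * b1) (b1 * b1).
move/PI_ext => h; apply: PI_eqv.
  apply: h => x; rewrite /Fc.
  by case: (ind_cases x) => [[-> ->]|[[-> ->]|[-> ->]]]; ring.
rewrite /QL /QR /Q; ring.
Qed.

Lemma Z1 a1 a0 b1 b0 : QL a0 a1 + QR b0 b1 = 0 -> {ae mu, forall x, Fc a1 a0 b1 b0 x = 0}.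
Proof.
move=> h; have := I3 a1 a0 b1 b0; rewrite h => /PI_eq0 H.
have := H (fun x => sqr_ge0 _); apply: aeS => x /eqP.
by rewrite sqrf_eq0 => /eqP.
Qed.

Lemma Z2 a1 a0 b1 b0 : {ae mu, forall x, Fc a1 a0 b1 b0 x = 0} -> QL a0 a1 + QR b0 b1 = 0.
Proof.
move=> h; apply: (@PI_ae0 _ _ (I3 a1 a0 b1 b0)).
by apply: aeS h => x ->; rewrite expr2 mulr0.
Qed.

Lemma Qpos a1 a0 b1 b0 : 0 <= QL a0 a1 + QR b0 b1.
Proof. apply: (@PI_ge0 _ _ (I3 a1 a0 b1 b0)) => x; exact: sqr_ge0. Qed.

Lemma QLpos a0 a1 : 0 <= QL a0 a1.
Proof. have := Qpos a1 a0 0 0; rewrite /QR /Q; lra. Qed.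

Lemma QRpos a0 a1 : 0 <= QR a0 a1.
Proof. have := Qpos 0 0 a1 a0; rewrite /QL /Q; lra. Qed.

Lemma L0zero : Lm 0 = 0 -> Lm 1 = 0 /\ Lm 2 = 0.
Proof.
move=> h0.
have ae : {ae mu, forall x, Fc 0 1 0 0 x = 0}.
  by apply: Z1; rewrite /QL /QR /Q h0; ring.
split.
  have := @PI_ae0 _ _ (I1 1 0 0 0); apply: impl.
    apply: aeS ae => x h.
    have -> : Fc 1 0 0 0 x = x * Fc 0 1 0 0 x by rewrite /Fc; ring.
    by rewrite h mulr0.
  lra.
have := @PI_ae0 _ _ (I2 1 0 0 0); apply: impl.
  apply: aeS ae => x h.
  have -> : Fc 1 0 0 0 x * x = x * x * Fc 0 1 0 0 x by rewrite /Fc; ring.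
  by rewrite h mulr0.
lra.
Qed.

Lemma R0zero : Rm 0 = 0 -> Rm 1 = 0 /\ Rm 2 = 0.
Proof.
move=> h0.
have ae : {ae mu, forall x, Fc 0 0 0 1 x = 0}.
  by apply: Z1; rewrite /QL /QR /Q h0; ring.
split.
  have := @PI_ae0 _ _ (I1 0 0 1 0); apply: impl.
    apply: aeS ae => x h.
    have -> : Fc 0 0 1 0 x = x * Fc 0 0 0 1 x by rewrite /Fc; ring.
    by rewrite h mulr0.
  lra.
have := @PI_ae0 _ _ (I2 0 0 1 0); apply: impl.
  apply: aeS ae => x h.
  have -> : Fc 0 0 1 0 x * x = x * x * Fc 0 0 0 1 x by rewrite /Fc; ring.
  by rewrite h mulr0.
lra.
Qed.

Lemma Lstrict : 0 < Lm 0 -> Lm 1 < @dyM R n k * Lm 0.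
Proof.
move=> L0p; set M := @dyM R n k.
have G0 : forall x, 0 <= Fc (-1) M 0 0 x.
  move=> x; rewrite /Fc indicE; case: (boolP (x \in L)) => [/set_mem hx|_].
    move: hx; rewrite /Ileft /= in_itv /= => /andP[_ h].
    rewrite /M; lra.
  rewrite /=; lra.
have v0 := @PI_ge0 _ _ (I1 (-1) M 0 0) G0.
rewrite ltNge; apply/negP => hle.
have e0 : M * Lm 0 + -1 * Lm 1 + 0 * Rm 0 + 0 * Rm 1 = 0 by lra.
have ae := @PI_eq0 _ (@PI_eqv _ _ _ (I1 (-1) M 0 0) e0) G0.
have := @PI_ae0 _ _ (I1 0 1 0 0); apply: impl; last by lra.
apply: aeS ae => x; rewrite /Fc !indicE; case: (boolP (x \in L)) => [/set_mem hx|_] /=.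
  move: hx; rewrite /Ileft /= in_itv /= => /andP[_ h]; rewrite /M; lra.
lra.
Qed.

Lemma Rge : @dyM R n k * Rm 0 <= Rm 1.
Proof.
set M := @dyM R n k.
have G0 : forall x, 0 <= Fc 0 0 1 (-M) x.
  move=> x; rewrite /Fc !indicE; case: (boolP (x \in RR)) => [/set_mem hx|_].
    move: hx; rewrite /Iright /= in_itv /= => /andP[h _].
    rewrite /M; lra.
  rewrite /=; lra.
have := @PI_ge0 _ _ (I1 0 0 1 (-M)) G0; lra.
Qed.

Lemma mu_Lm0 : Lm 0 = fine (mu L).
Proof.
rewrite /Lm (@eq_Rintegral _ _ _ mu _ (fun _ => 1)); last by move=> x _; rewrite expr0.
rewrite Rintegral_cst ?mul1r //; exact: measurable_itv.
Qed.

Lemma mu_Rm0 : Rm 0 = fine (mu RR).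
Proof.
rewrite /Rm (@eq_Rintegral _ _ _ mu _ (fun _ => 1)); last by move=> x _; rewrite expr0.
rewrite Rintegral_cst ?mul1r //; exact: measurable_itv.
Qed.

Lemma fin_L : (mu L < +oo)%E.
Proof.
apply: le_lt_trans (lf (@dyL R n k) (@dyM R n k)).
apply: le_measure; rewrite ?inE; try exact: measurable_itv.
by move=> x; rewrite /Ileft /= !in_itv /= => /andP[-> /ltW ->].
Qed.

Lemma fin_R : (mu RR < +oo)%E.
Proof.
apply: le_lt_trans (lf (@dyM R n k) (@dyR R n k)).
apply: le_measure; rewrite ?inE; try exact: measurable_itv.
by move=> x; rewrite /Iright /= !in_itv /= => /andP[-> /ltW ->].
Qed.

Lemma muL_pos : (0 < mu L)%E <-> 0 < Lm 0.
Proof.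
rewrite mu_Lm0; split => h.
  by apply: fine_gt0; rewrite h fin_L.
rewrite lt0e measure_ge0 andbT; apply/negP => /eqP h0.
by move: h; rewrite h0 /= ltxx.
Qed.

Lemma muR_pos : (0 < mu RR)%E <-> 0 < Rm 0.
Proof.
rewrite mu_Rm0; split => h.
  by apply: fine_gt0; rewrite h fin_R.
rewrite lt0e measure_ge0 andbT; apply/negP => /eqP h0.
by move: h; rewrite h0 /= ltxx.
Qed.


Lemma psd2 (m0 m1 m2 : R) : (forall a b, 0 <= Q m0 m1 m2 a b) -> 0 <= m0 /\ 0 <= m0 * m2 - m1 * m1.
Proof.
move=> h; have h0 := h 1 0; rewrite /Q in h0.
have m0p : 0 <= m0 by lra.
split => //.
case: (boolP (m0 == 0)) => [/eqP z|nz].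
  case: (boolP (m1 == 0)) => [/eqP z1|nz1]; first by rewrite z z1; lra.
  exfalso; have := h (- (m2 + 1) / (2 * m1)) 1; rewrite /Q z.
  have -> : 2 * (- (m2 + 1) / (2 * m1)) * 1 * m1 = - (m2 + 1) by field.
  lra.
have := h (- m1) m0; rewrite /Q.
have -> : - m1 * - m1 * m0 + 2 * - m1 * m0 * m1 + m0 * m0 * m2 = m0 * (m0 * m2 - m1 * m1) by ring.
have m0q : 0 < m0 by rewrite lt0r nz.
by rewrite pmulr_rge0.
Qed.

Lemma alg_gen (A0 A1 A2 B0 B1 : R) : A0 * A2 - A1 * A1 != 0 ->
  exists g0 g1, g0 * A0 + g1 * A1 + B0 = 0 /\ g0 * A1 + g1 * A2 + B1 = 0.
Proof.
move=> d; exists (- (A2 * B0 - A1 * B1) / (A0 * A2 - A1 * A1)).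
exists ((A1 * B0 - A0 * B1) / (A0 * A2 - A1 * A1)).
by split; field.
Qed.

Lemma alg_case1 (A0 A1 A2 B0 B1 B2 u0 u1 v0 v1 : R) : 0 < B0 -> B0 * B2 = B1 * B1 ->
  A0 * A2 - A1 * A1 != 0 ->
  u0 * A0 + u1 * A1 + v0 * B0 + v1 * B1 = 0 -> u0 * A1 + u1 * A2 + v0 * B1 + v1 * B2 = 0 ->
  v0 * B0 + v1 * B1 = 0 ->
  Q A0 A1 A2 u0 u1 + Q B0 B1 B2 v0 v1 = 0.
Proof.
move=> B0p dB dA c1 c2 t.
have w : v0 * B1 + v1 * B2 = 0.
  have : B0 * (v0 * B1 + v1 * B2) = B1 * (v0 * B0 + v1 * B1) + v1 * (B0 * B2 - B1 * B1) by ring.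
  rewrite t dB subrr !mulr0 addr0 => /eqP; rewrite mulf_eq0 (negbTE (lt0r_neq0 B0p)) /= => /eqP //.
have e1 : u0 * A0 + u1 * A1 = 0 by lra.
have e2 : u0 * A1 + u1 * A2 = 0 by lra.
have u00 : u0 = 0.
  have : u0 * (A0 * A2 - A1 * A1) = A2 * (u0 * A0 + u1 * A1) - A1 * (u0 * A1 + u1 * A2) by ring.
  rewrite e1 e2 !mulr0 subrr => /eqP; rewrite mulf_eq0 (negbTE dA) orbF => /eqP //.
have u10 : u1 = 0.
  have : u1 * (A0 * A2 - A1 * A1) = A0 * (u0 * A1 + u1 * A2) - A1 * (u0 * A0 + u1 * A1) by ring.
  rewrite e1 e2 !mulr0 subrr => /eqP; rewrite mulf_eq0 (negbTE dA) orbF => /eqP //.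
have -> : Q B0 B1 B2 v0 v1 = v0 * (v0 * B0 + v1 * B1) + v1 * (v0 * B1 + v1 * B2) by rewrite /Q; ring.
by rewrite t w u00 u10 /Q; ring.
Qed.

Lemma alg_rank11 (L0 L1 L2 R0 R1 R2 M a0 a1 b0 b1 : R) : 0 < L0 -> 0 < R0 ->
  L0 * L2 = L1 * L1 -> R0 * R2 = R1 * R1 -> L1 < M * L0 -> M * R0 <= R1 ->
  a0 * L0 + a1 * L1 + b0 * R0 + b1 * R1 = 0 -> a0 * L1 + a1 * L2 + b0 * R1 + b1 * R2 = 0 ->
  Q L0 L1 L2 a0 a1 + Q R0 R1 R2 b0 b1 = 0.
Proof.
move=> L0p R0p dL dR lt ge c1 c2.
set s := a0 * L0 + a1 * L1; set t := b0 * R0 + b1 * R1.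
have st : s + t = 0 by rewrite /s /t; lra.
have e : R0 * L1 * s + L0 * R1 * t = 0.
  have : L0 * R0 * (a0 * L1 + a1 * L2 + b0 * R1 + b1 * R2) =
     R0 * L1 * s + L0 * R1 * t + R0 * a1 * (L0 * L2 - L1 * L1) + L0 * b1 * (R0 * R2 - R1 * R1).
    by rewrite /s /t; ring.
  by rewrite c2 dL dR !subrr !mulr0 !addr0.
have tE : t = - s by lra.
rewrite tE in e.
have s0 : s = 0.
  have : s * (R0 * L1 - L0 * R1) = 0 by rewrite -e; ring.
  move/eqP; rewrite mulf_eq0 => /orP[/eqP //|/eqP h].
  exfalso.
  have : R0 * L1 < R0 * (M * L0) by rewrite ltr_pM2l.
  have : L0 * (M * R0) <= L0 * R1 by rewrite ler_pM2l.
  lra.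
have t0 : t = 0 by rewrite tE s0 oppr0.
have qL : L0 * Q L0 L1 L2 a0 a1 = s ^+ 2 + a1 * a1 * (L0 * L2 - L1 * L1) by rewrite /Q /s; ring.
have qR : R0 * Q R0 R1 R2 b0 b1 = t ^+ 2 + b1 * b1 * (R0 * R2 - R1 * R1) by rewrite /Q /t; ring.
rewrite dL subrr mulr0 addr0 s0 expr2 mulr0 in qL.
rewrite dR subrr mulr0 addr0 t0 expr2 mulr0 in qR.
move/eqP: qL; rewrite mulf_eq0 (negbTE (lt0r_neq0 L0p)) /= => /eqP ->.
move/eqP: qR; rewrite mulf_eq0 (negbTE (lt0r_neq0 R0p)) /= => /eqP ->.
by rewrite addr0.
Qed.


Lemma posdefL : posdef (Mmat mu L) <-> 0 < Lm 0 /\ 0 < Lm 0 * Lm 2 - Lm 1 * Lm 1.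
Proof. by rewrite (@posdefP _ (Mmat mu L)) ?mxE. Qed.

Lemma posdefR : posdef (Mmat mu RR) <-> 0 < Rm 0 /\ 0 < Rm 0 * Rm 2 - Rm 1 * Rm 1.
Proof. by rewrite (@posdefP _ (Mmat mu RR)) ?mxE. Qed.

Lemma detL : \det (Mmat mu L) = Lm 0 * Lm 2 - Lm 1 * Lm 1.
Proof. by rewrite det22 !mxE. Qed.

Lemma detR : \det (Mmat mu RR) = Rm 0 * Rm 2 - Rm 1 * Rm 1.
Proof. by rewrite det22 !mxE. Qed.

Lemma unpack f : L2I2 mu n k f -> exists a1 a0 b1 b0, f = Fc a1 a0 b1 b0 /\
  a0 * Lm 0 + a1 * Lm 1 + b0 * Rm 0 + b1 * Rm 1 = 0 /\
  a0 * Lm 1 + a1 * Lm 2 + b0 * Rm 1 + b1 * Rm 2 = 0.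
Proof.
case=> [[a1 [a0 [b1 [b0 fE]]]] [h1 h2]].
exists a1, a0, b1, b0; split; first exact: fE.
rewrite fE in h1 h2.
change (\int[mu]_x (Fc a1 a0 b1 b0 x)%:E = 0)%E in h1.
change (\int[mu]_x (Fc a1 a0 b1 b0 x * x)%:E = 0)%E in h2.
rewrite (I1 a1 a0 b1 b0).2 in h1; rewrite (I2 a1 a0 b1 b0).2 in h2.
by case: h1 => ->; case: h2 => ->.
Qed.

Lemma pack a1 a0 b1 b0 : a0 * Lm 0 + a1 * Lm 1 + b0 * Rm 0 + b1 * Rm 1 = 0 ->
  a0 * Lm 1 + a1 * Lm 2 + b0 * Rm 1 + b1 * Rm 2 = 0 -> L2I2 mu n k (Fc a1 a0 b1 b0).
Proof.
move=> c1 c2; split; first by exists a1, a0, b1, b0.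
split.
  by rewrite (I1 a1 a0 b1 b0).2 c1.
by rewrite (I2 a1 a0 b1 b0).2 c2.
Qed.


Lemma main_sec : (case1 mu n k -> L2I2_dim1 mu n k) /\
  (~ case1 mu n k -> (~ posdef (Mmat mu L) \/ ~ posdef (Mmat mu RR)) -> L2I2_zero mu n k).
Proof.
have [L0ge dLge] := @psd2 _ _ _ (fun a b => QLpos a b).
have [R0ge dRge] := @psd2 _ _ _ (fun a b => QRpos a b).
split.
- case=> [muL [muR H]].
  have L0p := muL_pos.1 muL; have R0p := muR_pos.1 muR.
  case: H => [[pd dt]|[pd dt]].
  + move/posdefL: pd => [_ dLp]; rewrite detR in dt.
    have dRz : Rm 0 * Rm 2 = Rm 1 * Rm 1 by lra.
    have dLn : Lm 0 * Lm 2 - Lm 1 * Lm 1 != 0 by exact: lt0r_neq0.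
    have [g0 [g1 [cg1 cg2]]] := @alg_gen _ _ _ (Rm 0) (Rm 1) dLn.
    exists (Fc g1 g0 0 1); split; [|split].
    * by apply: pack; lra.
    * move/Z2; have := QLpos g0 g1; rewrite /QR /Q; lra.
    * move=> f /unpack [a1 [a0 [b1 [b0 [-> [c1 c2]]]]]].
      pose c := (b0 * Rm 0 + b1 * Rm 1) / Rm 0.
      exists c.
      suff hz : QL (a0 - c * g0) (a1 - c * g1) + QR (b0 - c * 1) (b1 - c * 0) = 0.
        apply: aeS (@Z1 _ _ _ _ hz) => x h; apply/eqP; rewrite -subr_eq0; apply/eqP; rewrite [RHS](esym h) /Fc; ring.
      rewrite /QL /QR; apply: alg_case1 => //.
      - have -> : (a0 - c * g0) * Lm 0 + (a1 - c * g1) * Lm 1 + (b0 - c * 1) * Rm 0 + (b1 - c * 0) * Rm 1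
           = (a0 * Lm 0 + a1 * Lm 1 + b0 * Rm 0 + b1 * Rm 1) - c * (g0 * Lm 0 + g1 * Lm 1 + Rm 0) by ring.
        by rewrite c1 cg1; ring.
      - have -> : (a0 - c * g0) * Lm 1 + (a1 - c * g1) * Lm 2 + (b0 - c * 1) * Rm 1 + (b1 - c * 0) * Rm 2
           = (a0 * Lm 1 + a1 * Lm 2 + b0 * Rm 1 + b1 * Rm 2) - c * (g0 * Lm 1 + g1 * Lm 2 + Rm 1) by ring.
        by rewrite c2 cg2; ring.
      - rewrite /c; field; exact: lt0r_neq0.
  + move/posdefR: pd => [_ dRp]; rewrite detL in dt.
    have dLz : Lm 0 * Lm 2 = Lm 1 * Lm 1 by lra.
    have dRn : Rm 0 * Rm 2 - Rm 1 * Rm 1 != 0 by exact: lt0r_neq0.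
    have [g0 [g1 [cg1 cg2]]] := @alg_gen _ _ _ (Lm 0) (Lm 1) dRn.
    exists (Fc 0 1 g1 g0); split; [|split].
    * by apply: pack; lra.
    * move/Z2; have := QRpos g0 g1; rewrite /QL /Q; lra.
    * move=> f /unpack [a1 [a0 [b1 [b0 [-> [c1 c2]]]]]].
      pose c := (a0 * Lm 0 + a1 * Lm 1) / Lm 0.
      exists c.
      suff hz : QL (a0 - c * 1) (a1 - c * 0) + QR (b0 - c * g0) (b1 - c * g1) = 0.
        apply: aeS (@Z1 _ _ _ _ hz) => x h; apply/eqP; rewrite -subr_eq0; apply/eqP; rewrite [RHS](esym h) /Fc; ring.
      rewrite /QL /QR addrC; apply: alg_case1 => //.
      - have -> : (b0 - c * g0) * Rm 0 + (b1 - c * g1) * Rm 1 + (a0 - c * 1) * Lm 0 + (a1 - c * 0) * Lm 1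
           = (a0 * Lm 0 + a1 * Lm 1 + b0 * Rm 0 + b1 * Rm 1) - c * (g0 * Rm 0 + g1 * Rm 1 + Lm 0) by ring.
        by rewrite c1 cg1; ring.
      - have -> : (b0 - c * g0) * Rm 1 + (b1 - c * g1) * Rm 2 + (a0 - c * 1) * Lm 1 + (a1 - c * 0) * Lm 2
           = (a0 * Lm 1 + a1 * Lm 2 + b0 * Rm 1 + b1 * Rm 2) - c * (g0 * Rm 1 + g1 * Rm 2 + Lm 1) by ring.
        by rewrite c2 cg2; ring.
      - rewrite /c; field; exact: lt0r_neq0.
- move=> nc npd f /unpack [a1 [a0 [b1 [b0 [-> [c1 c2]]]]]]; apply: Z1.
  case: (boolP (Lm 0 == 0)) => [/eqP L00|L0n].
    have [L10 L20] := L0zero L00.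
    have -> : QR b0 b1 = b0 * (a0 * Lm 0 + a1 * Lm 1 + b0 * Rm 0 + b1 * Rm 1)
        + b1 * (a0 * Lm 1 + a1 * Lm 2 + b0 * Rm 1 + b1 * Rm 2).
      by rewrite /QR /Q L00 L10 L20; ring.
    by rewrite c1 c2 /QL /Q L00 L10 L20; ring.
  case: (boolP (Rm 0 == 0)) => [/eqP R00|R0n].
    have [R10 R20] := R0zero R00.
    have -> : QL a0 a1 = a0 * (a0 * Lm 0 + a1 * Lm 1 + b0 * Rm 0 + b1 * Rm 1)
        + a1 * (a0 * Lm 1 + a1 * Lm 2 + b0 * Rm 1 + b1 * Rm 2).
      by rewrite /QL /Q R00 R10 R20; ring.
    by rewrite c1 c2 /QR /Q R00 R10 R20; ring.
  have L0p : 0 < Lm 0 by rewrite lt0r L0n.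
  have R0p : 0 < Rm 0 by rewrite lt0r R0n.
  have hL : ~ posdef (Mmat mu L) -> Lm 0 * Lm 2 - Lm 1 * Lm 1 = 0.
    move=> nL; apply/eqP; rewrite eq_le dLge andbT leNgt; apply/negP => dp.
    by apply: nL; apply/posdefL.
  have hR : ~ posdef (Mmat mu RR) -> Rm 0 * Rm 2 - Rm 1 * Rm 1 = 0.
    move=> nR; apply/eqP; rewrite eq_le dRge andbT leNgt; apply/negP => dp.
    by apply: nR; apply/posdefR.
  have [dL0 dR0] : Lm 0 * Lm 2 - Lm 1 * Lm 1 = 0 /\ Rm 0 * Rm 2 - Rm 1 * Rm 1 = 0.
    case: npd => [nL|nR].
      have dL0 := hL nL; split => //; apply: hR => pR; apply: nc.
      split; first exact/muL_pos.
      split; first exact/muR_pos.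
      by right; split => //; rewrite detL.
    have dR0 := hR nR; split => //; apply: hL => pL; apply: nc.
    split; first exact/muL_pos.
    split; first exact/muR_pos.
    by left; split => //; rewrite detR.
  apply: (@alg_rank11 _ _ _ _ _ _ (@dyM R n k)) => //.
  - lra.
  - lra.
  - exact: Lstrict.
  - exact: Rge.
Qed.

End Meas.


Theorem lemma2 (R : realType) (mu : {measure set (measurableTypeR R) -> \bar R})
  (n k : int) :
  locally_finite mu ->
  (case1 mu n k -> L2I2_dim1 mu n k) /\
  (~ case1 mu n k ->
     (~ posdef (Mmat mu (@Ileft R n k)) \/ ~ posdef (Mmat mu (@Iright R n k))) ->
     L2I2_zero mu n k).
Proof. by move=> lf; exact: (@main_sec R mu lf n k). Qed.
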